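(* Let $(\eta,F)$ be any generalised entropy. Then: (a) for any jointly distributed random variables $X$ (with values in a finite set) and $Y$ (discrete), $H(X)-H(X\mid Y)\geq 0$; (b) (data processing inequality) for any discrete random variables $X,Y,Z$ such that $Z$ is conditionally independent of $X$ given $Y$, we have $H(X\mid Z)\geq H(X\mid Y)$.
   Context: Generalised entropy: a pair $(\eta,F)$ where $F$ is a bounded real-valued function defined on probability vectors of every finite length, which is symmetric (unchanged by permuting entries) and expansible (unchanged by appending zero entries), and $\eta$ is a real function of a real variable, such that either (a) $\eta$ is increasing and $F$ is concave, or (b) $\eta$ is decreasing and $F$ is convex. The entropies are $H(X)=\eta(F(p_X))$ and $H(X\mid Y)=\eta\big(\sum_{y:\,p(y)>0}p(y)F(p_{X\mid y})\big)$, where $p_{X\mid y}=(p(x\mid y))_x$ is the posterior distribution of $X$ given $Y=y$ (and similarly for $Z$). *)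

(* Defs.v *)
From Stdlib Require Import Reals List Permutation.
From Coquelicot Require Import Coquelicot.
Open Scope R_scope.

Definition rsum (n : nat) (f : nat -> R) : R :=
  fold_right Rplus 0 (map f (seq 0 n)).

Definition probvec (l : list R) : Prop :=
  List.Forall (fun a => 0 <= a) l /\ fold_right Rplus 0 l = 1.

Definition mix (t : R) (l1 l2 : list R) : list R :=
  map (fun ab => t * fst ab + (1 - t) * snd ab) (combine l1 l2).

Definition F_bounded (F : list R -> R) : Prop :=
  exists M, forall l, probvec l -> Rabs (F l) <= M.

Definition F_symmetric (F : list R -> R) : Prop :=
  forall l1 l2, probvec l1 -> Permutation l1 l2 -> F l1 = F l2.

Definition F_expansible (F : list R -> R) : Prop :=
  forall l, probvec l -> F (l ++ 0 :: nil) = F l.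

Definition F_concave (F : list R -> R) : Prop :=
  forall l1 l2 t, probvec l1 -> probvec l2 -> length l1 = length l2 ->
    0 <= t <= 1 -> t * F l1 + (1 - t) * F l2 <= F (mix t l1 l2).

Definition F_convex (F : list R -> R) : Prop :=
  forall l1 l2 t, probvec l1 -> probvec l2 -> length l1 = length l2 ->
    0 <= t <= 1 -> F (mix t l1 l2) <= t * F l1 + (1 - t) * F l2.

(* "increasing"/"decreasing" taken in the weak (monotone) sense *)
Definition increasing_fun (eta : R -> R) : Prop :=
  forall a b, a <= b -> eta a <= eta b.
Definition decreasing_fun (eta : R -> R) : Prop :=
  forall a b, a <= b -> eta b <= eta a.

Definition gen_entropy (eta : R -> R) (F : list R -> R) : Prop :=
  F_bounded F /\ F_symmetric F /\ F_expansible F /\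
  ((increasing_fun eta /\ F_concave F) \/ (decreasing_fun eta /\ F_convex F)).

(* A joint distribution of (X,Y): X takes values in {0,...,n-1},
   Y takes values in nat (any discrete variable, encoded injectively). *)
Definition joint_pmf (n : nat) (p : nat -> nat -> R) : Prop :=
  (forall x y, 0 <= p x y) /\ (forall x, ex_series (p x)) /\
  rsum n (fun x => Series (p x)) = 1.

Definition marg_X (n : nat) (p : nat -> nat -> R) : list R :=
  map (fun x => Series (p x)) (seq 0 n).

Definition marg_Y (n : nat) (p : nat -> nat -> R) (y : nat) : R :=
  rsum n (fun x => p x y).

Definition posterior (n : nat) (p : nat -> nat -> R) (y : nat) : list R :=
  map (fun x => p x y / marg_Y n p y) (seq 0 n).

Definition H_X (eta : R -> R) (F : list R -> R) (n : nat) (p : nat -> nat -> R) : R :=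
  eta (F (marg_X n p)).

Definition H_cond (eta : R -> R) (F : list R -> R) (n : nat) (p : nat -> nat -> R) : R :=
  eta (Series (fun y =>
    if Rlt_dec 0 (marg_Y n p y) then marg_Y n p y * F (posterior n p y) else 0)).

Definition joint3_pmf (n : nat) (p : nat -> nat -> nat -> R) : Prop :=
  (forall x y z, 0 <= p x y z) /\ (forall x y, ex_series (p x y)) /\
  (forall x, ex_series (fun y => Series (p x y))) /\
  rsum n (fun x => Series (fun y => Series (p x y))) = 1.

Definition marg_XY (p : nat -> nat -> nat -> R) (x y : nat) : R :=
  Series (fun z => p x y z).
Definition marg_XZ (p : nat -> nat -> nat -> R) (x z : nat) : R :=
  Series (fun y => p x y z).

(* Z conditionally independent of X given Y:
   p(x,y,z) p(y) = p(x,y) p(y,z) for all x,y,z *)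
Definition cond_indep_Z_X_given_Y (n : nat) (p : nat -> nat -> nat -> R) : Prop :=
  forall x y z,
    p x y z * rsum n (fun x' => marg_XY p x' y) =
    marg_XY p x y * rsum n (fun x' => p x' y z).

(* Main.v *)
Require Import Defs.
From Stdlib Require Import Reals List Permutation Lra Lia.
From Coquelicot Require Import Coquelicot.
Open Scope R_scope.

Lemma rsum_S n f : rsum (S n) f = rsum n f + f n.
Proof.
  unfold rsum. rewrite seq_S, map_app, fold_right_app. simpl.
  generalize (map f (seq 0 n)). intro l. induction l; simpl; [ring| rewrite IHl; ring].
Qed.

Lemma rsum_0 f : rsum 0 f = 0.
Proof. reflexivity. Qed.

Lemma rsum_ext n f g : (forall i, (i < n)%nat -> f i = g i) -> rsum n f = rsum n g.
Proof.
  induction n; intros H; [reflexivity|]. rewrite !rsum_S, IHn, H; auto; intros; apply H; lia.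
Qed.

Lemma rsum_plus n f g : rsum n (fun i => f i + g i) = rsum n f + rsum n g.
Proof. induction n; [rewrite !rsum_0; ring|]. rewrite !rsum_S, IHn. ring. Qed.

Lemma rsum_scal n c f : rsum n (fun i => c * f i) = c * rsum n f.
Proof. induction n; [rewrite !rsum_0; ring|]. rewrite !rsum_S, IHn. ring. Qed.

Lemma rsum_const0 n : rsum n (fun _ => 0) = 0.
Proof. induction n; [reflexivity|]. rewrite rsum_S, IHn. ring. Qed.

Lemma rsum_le n f g : (forall i, (i < n)%nat -> f i <= g i) -> rsum n f <= rsum n g.
Proof.
  induction n; intros H; [rewrite !rsum_0; lra|]. rewrite !rsum_S.
  assert (f n <= g n) by (apply H; lia).
  assert (rsum n f <= rsum n g) by (apply IHn; intros; apply H; lia). lra.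
Qed.

Lemma rsum_nonneg n f : (forall i, (i < n)%nat -> 0 <= f i) -> 0 <= rsum n f.
Proof. intros H. rewrite <- (rsum_const0 n). apply rsum_le; auto. Qed.

Lemma rsum_mono N N' f : (forall i, 0 <= f i) -> (N <= N')%nat -> rsum N f <= rsum N' f.
Proof.
  intros H Hle. induction Hle; [lra|]. rewrite rsum_S. specialize (H m). lra.
Qed.

Lemma term_le_rsum n f i : (forall j, (j < n)%nat -> 0 <= f j) -> (i < n)%nat -> f i <= rsum n f.
Proof.
  induction n; intros H Hi; [lia|]. rewrite rsum_S.
  assert (0 <= rsum n f) by (apply rsum_nonneg; intros; apply H; lia).
  destruct (Nat.eq_dec i n).
  - subst. lra.
  - assert (f i <= rsum n f) by (apply IHn; [intros; apply H; lia| lia]).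
    assert (0 <= f n) by (apply H; lia). lra.
Qed.

Lemma rsum_zero n f : (forall j, (j < n)%nat -> 0 <= f j) -> rsum n f = 0 ->
  forall i, (i < n)%nat -> f i = 0.
Proof.
  intros H H0 i Hi. pose proof (term_le_rsum n f i H Hi). pose proof (H i Hi). lra.
Qed.

Lemma rsum_swap n N h :
  rsum n (fun i => rsum N (fun k => h k i)) = rsum N (fun k => rsum n (h k)).
Proof.
  induction N.
  - rewrite rsum_0. apply rsum_const0.
  - rewrite rsum_S. rewrite <- IHN. rewrite <- rsum_plus. apply rsum_ext. intros i _. rewrite rsum_S. reflexivity.
Qed.

Lemma sum_n_rsum a N : sum_n a N = rsum (S N) a.
Proof.
  induction N.
  - rewrite sum_O. unfold rsum; simpl. symmetry; apply Rplus_0_r.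
  - rewrite sum_Sn, IHN, (rsum_S (S N)). reflexivity.
Qed.

Lemma is_series_le a b la lb : is_series a la -> is_series b lb ->
  (forall k, a k <= b k) -> la <= lb.
Proof.
  intros Ha Hb H.
  assert (Rbar_le la lb).
  { apply (is_lim_seq_le (sum_n a) (sum_n b)); [|exact Ha|exact Hb].
    intros N. rewrite !sum_n_rsum. apply rsum_le. intros; apply H. }
  exact H0.
Qed.

Lemma partial_le a l N : (forall k, 0 <= a k) -> is_series a l -> rsum N a <= l.
Proof.
  intros Hp Hs.
  assert (Rbar_le (rsum N a) l).
  { apply (is_lim_seq_le_loc (fun _ => rsum N a) (sum_n a)); [|apply is_lim_seq_const|exact Hs].
    exists N. intros n Hn. rewrite sum_n_rsum. apply rsum_mono; auto. }
  exact H.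
Qed.

Lemma term_le_series a l k : (forall k, 0 <= a k) -> is_series a l -> a k <= l.
Proof.
  intros Hp Hs. eapply Rle_trans; [|apply (partial_le a l (S k) Hp Hs)].
  apply term_le_rsum; auto.
Qed.

Lemma series_nonneg a l : (forall k, 0 <= a k) -> is_series a l -> 0 <= l.
Proof. intros. apply (partial_le a l 0); auto. Qed.

Lemma series_zero a : (forall k, 0 <= a k) -> is_series a 0 -> forall k, a k = 0.
Proof. intros Hp Hs k. pose proof (term_le_series a 0 k Hp Hs). specialize (Hp k). lra. Qed.

Lemma nonneg_bounded_ex a B : (forall k, 0 <= a k) -> (forall N, rsum N a <= B) -> ex_series a.
Proof.
  intros Hp HB. apply ex_series_Reals_1.
  apply growing_cv.
  - intros N. rewrite <- !sum_n_Reals, !sum_n_rsum, (rsum_S (S N)). specialize (Hp (S N)). lra.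
  - exists B. intros x [N ->]. rewrite <- sum_n_Reals, sum_n_rsum. apply HB.
Qed.

Lemma is_series_0 : is_series (fun _ => 0) 0.
Proof.
  assert (H : is_lim_seq (sum_n (fun _ => 0)) 0).
  { apply (is_lim_seq_ext (fun _ => 0)); [|apply is_lim_seq_const].
    intros N. rewrite sum_n_rsum. symmetry. apply rsum_const0. }
  exact H.
Qed.

Lemma is_series_Rplus a b la lb : is_series a la -> is_series b lb ->
  is_series (fun n => a n + b n) (la + lb).
Proof. intros. exact (is_series_plus a b la lb H H0). Qed.

Lemma is_series_Rmult c a l : is_series a l -> is_series (fun n => c * a n) (c * l).
Proof. intros. exact (is_series_scal_l c a l H). Qed.

Lemma is_series_Ropp a l : is_series a l -> is_series (fun n => - a n) (- l).
Proof. intros. exact (is_series_opp a l H). Qed.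

Lemma is_series_Rminus a b la lb : is_series a la -> is_series b lb ->
  is_series (fun n => a n - b n) (la - lb).
Proof. intros. apply is_series_Rplus; auto. apply is_series_Ropp; auto. Qed.

Lemma is_series_rsum N (a : nat -> nat -> R) (l : nat -> R) :
  (forall j, (j < N)%nat -> is_series (a j) (l j)) ->
  is_series (fun k => rsum N (fun j => a j k)) (rsum N l).
Proof.
  induction N; intros H.
  - rewrite rsum_0. apply (is_series_ext (fun _ => 0)); [reflexivity|]. apply is_series_0.
  - rewrite rsum_S. apply (is_series_ext (fun k => rsum N (fun j => a j k) + a N k)).
    + intros; rewrite rsum_S; reflexivity.
    + apply is_series_Rplus; [apply IHN; intros; apply H; lia| apply H; lia].
Qed.

Lemma ex_series_bound a u : (forall k, Rabs (a k) <= u k) -> ex_series u -> ex_series a.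
Proof. intros. apply (ex_series_le a u); auto. Qed.

Lemma series_abs_bound a u la lu : (forall k, Rabs (a k) <= u k) -> is_series a la -> is_series u lu ->
  Rabs la <= lu.
Proof.
  intros H Ha Hu. apply Rabs_le. split.
  - assert (- lu <= la); [|lra]. apply (is_series_le (fun k => - u k) a); auto.
    apply is_series_Ropp; auto. intros k; specialize (H k); apply Rabs_le_between in H; lra.
  - apply (is_series_le a u); auto. intros k; specialize (H k); apply Rabs_le_between in H; lra.
Qed.

Lemma rsum_minus n f g : rsum n (fun i => f i - g i) = rsum n f - rsum n g.
Proof. induction n; [rewrite !rsum_0; ring|]. rewrite !rsum_S, IHn. ring. Qed.


Definition vec (f : nat -> R) (n : nat) : list R := map f (seq 0 n).
Definition pconds (n : nat) (f : nat -> R) : Prop :=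
  (forall i, (i < n)%nat -> 0 <= f i) /\ rsum n f = 1.

Lemma vec_ext n f g : (forall i, (i < n)%nat -> f i = g i) -> vec f n = vec g n.
Proof.
  intros H. unfold vec. apply map_ext_in. intros i Hi. apply in_seq in Hi. apply H. lia.
Qed.

Lemma length_vec f n : length (vec f n) = n.
Proof. unfold vec. rewrite length_map, length_seq. reflexivity. Qed.

Lemma probvec_vec n f : pconds n f -> probvec (vec f n).
Proof.
  intros [H1 H2]. split; [|exact H2].
  apply Forall_forall. intros x Hx. unfold vec in Hx. apply in_map_iff in Hx.
  destruct Hx as [i [<- Hi]]. apply in_seq in Hi. apply H1. lia.
Qed.

Lemma mix_vec t n f g : mix t (vec f n) (vec g n) = vec (fun i => t * f i + (1 - t) * g i) n.
Proof.
  unfold mix, vec. generalize (seq 0 n). intros l. induction l; simpl; [reflexivity|].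
  rewrite IHl. reflexivity.
Qed.

Lemma conc_vec G n f g t : F_concave G -> pconds n f -> pconds n g -> 0 <= t <= 1 ->
  t * G (vec f n) + (1 - t) * G (vec g n) <= G (vec (fun i => t * f i + (1 - t) * g i) n).
Proof.
  intros HG Hf Hg Ht. rewrite <- mix_vec. apply HG; auto using probvec_vec.
  rewrite !length_vec; reflexivity.
Qed.

Lemma jensen (G : list R -> R) (M : R) (n : nat) (w : nat -> R) (v : nat -> nat -> R) (m : nat -> R) :
  F_concave G -> (forall l, probvec l -> Rabs (G l) <= M) ->
  (forall k, 0 <= w k) -> is_series w 1 ->
  (forall k, 0 < w k -> pconds n (v k)) ->
  (forall i, (i < n)%nat -> is_series (fun k => w k * v k i) (m i)) ->
  is_series (fun k => w k * G (vec (v k) n)) (Series (fun k => w k * G (vec (v k) n))) /\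
  Series (fun k => w k * G (vec (v k) n)) <= G (vec m n).
Proof.
  intros HG HB Hw Hws Hv Hm.
  assert (Hwv : forall k, rsum n (fun i => w k * v k i) = w k).
  { intros k. rewrite rsum_scal. destruct (Hw k) as [Hk|Hk].
    - destruct (Hv k Hk) as [_ ->]. ring.
    - rewrite <- Hk. ring. }
  assert (Hwv0 : forall k i, (i < n)%nat -> 0 <= w k * v k i).
  { intros k i Hi. destruct (Hw k) as [Hk|Hk].
    - destruct (Hv k Hk) as [H1 _]. apply Rmult_le_pos; [lra| apply H1; exact Hi].
    - rewrite <- Hk. lra. }
  assert (HM : 0 <= M).
  { assert (probvec (1 :: nil)) by (split; [constructor; [lra|constructor] | simpl; ring]).
    specialize (HB _ H). pose proof (Rabs_pos (G (1 :: nil))). lra. }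
  assert (HGk : forall k, Rabs (w k * G (vec (v k) n)) <= M * w k).
  { intros k. rewrite Rabs_mult, (Rabs_right (w k)) by (apply Rle_ge; auto).
    destruct (Hw k) as [Hk|Hk].
    - rewrite Rmult_comm. apply Rmult_le_compat_r; [lra|]. apply HB, probvec_vec, Hv; auto.
    - rewrite <- Hk. lra. }
  assert (Hex : ex_series (fun k => w k * G (vec (v k) n))).
  { apply (ex_series_bound _ (fun k => M * w k)); auto.
    eexists. apply is_series_Rmult. exact Hws. }
  split; [apply Series_correct; exact Hex|].
  assert (HPS : forall N, rsum n (fun i => rsum N (fun k => w k * v k i)) = rsum N w).
  { intros N. rewrite rsum_swap. apply rsum_ext. intros k _. apply Hwv. }
  assert (HP0 : forall N i, (i < n)%nat -> 0 <= rsum N (fun k => w k * v k i)).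
  { intros N i Hi. apply rsum_nonneg. intros; apply Hwv0; auto. }
  assert (Hmean : forall N, 0 < rsum N w ->
             pconds n (fun i => rsum N (fun k => w k * v k i) / rsum N w)).
  { intros N HS. split.
    - intros i Hi. apply Rdiv_le_0_compat; auto.
    - unfold Rdiv. rewrite (rsum_ext n _ (fun i => / rsum N w * rsum N (fun k => w k * v k i))).
      + rewrite rsum_scal, HPS. field. lra.
      + intros; ring. }
  assert (Hfin : forall N, 0 < rsum N w ->
    rsum N (fun k => w k * G (vec (v k) n)) <=
    rsum N w * G (vec (fun i => rsum N (fun k => w k * v k i) / rsum N w) n)).
  { induction N as [|N IH]; intros HS.
    - rewrite rsum_0 in HS. lra.
    - assert (Hpos := rsum_nonneg N w (fun i _ => Hw i)).
      destruct (Req_dec (w N) 0) as [E|E].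
      + rewrite rsum_S, E, Rplus_0_r in HS. rewrite !rsum_S, !E, !Rplus_0_r, Rmult_0_l, Rplus_0_r.
        replace (vec (fun i => rsum (S N) (fun k => w k * v k i) / rsum N w) n)
          with (vec (fun i => rsum N (fun k => w k * v k i) / rsum N w) n).
        * apply IH; auto.
        * apply vec_ext. intros. rewrite rsum_S, E, Rmult_0_l, Rplus_0_r. reflexivity.
      + assert (HwN : 0 < w N) by (destruct (Hw N); auto; lra).
        destruct (Req_dec (rsum N w) 0) as [E0|E0].
        * assert (Hz : forall k, (k < N)%nat -> w k = 0) by (apply rsum_zero; auto).
          assert (HQ : rsum N (fun k => w k * G (vec (v k) n)) = 0).
          { rewrite <- (rsum_const0 N). apply rsum_ext. intros k Hk. rewrite Hz; auto. ring. }
          rewrite !rsum_S, HQ, E0.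
          replace (vec (fun i => rsum (S N) (fun k => w k * v k i) / (0 + w N)) n) with (vec (v N) n).
          { lra. }
          apply vec_ext. intros i Hi. rewrite rsum_S.
          rewrite (rsum_ext N _ (fun _ => 0)) by (intros k Hk; rewrite Hz; auto; ring).
          rewrite rsum_const0. field. lra.
        * assert (HSp : 0 < rsum N w) by lra.
          specialize (IH HSp).
          pose (S0 := rsum N w). fold S0 in IH, HSp.
          pose (t := S0 / (S0 + w N)).
          assert (Ht : 0 <= t <= 1).
          { unfold t; split; [apply Rdiv_le_0_compat; lra|].
            apply Rmult_le_reg_r with (S0 + w N); [lra|]. unfold Rdiv. rewrite Rmult_assoc, Rinv_l by lra. lra. }
          set (V := vec (fun i => rsum (S N) (fun k => w k * v k i) / rsum (S N) w) n).
          assert (EV : vec (fun i => t * (rsum N (fun k => w k * v k i) / rsum N w) + (1 - t) * v N i) n = V).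
          { unfold V. apply vec_ext. intros i Hi. rewrite !rsum_S. fold S0. unfold t. field. lra. }
          assert (Hc : t * G (vec (fun i => rsum N (fun k => w k * v k i) / rsum N w) n) + (1 - t) * G (vec (v N) n) <= G V).
          { rewrite <- EV. apply (conc_vec G n (fun i => rsum N (fun k => w k * v k i) / rsum N w) (v N) t HG (Hmean N HSp) (Hv N HwN) Ht). }
          rewrite !rsum_S. fold S0.
          assert (Heq : S0 + w N = (S0 + w N) * t + (S0 + w N) * (1 - t) /\
                  (S0 + w N) * t = S0 /\ (S0 + w N) * (1 - t) = w N).
          { unfold t. split; [ring|]. split; field; lra. }
          destruct Heq as [_ [H1 H2]].
          apply Rmult_le_compat_l with (r := S0 + w N) in Hc; [|lra].
          rewrite Rmult_plus_distr_l, <- !Rmult_assoc, H1, H2 in Hc.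
          unfold S0 in *. lra. }
  assert (Hmge : forall N i, (i < n)%nat -> rsum N (fun k => w k * v k i) <= m i).
  { intros N i Hi. apply partial_le; [intros; apply Hwv0; auto | auto]. }
  assert (Hm0 : forall i, (i < n)%nat -> 0 <= m i).
  { intros i Hi. eapply series_nonneg; [|apply Hm; auto]. intros; apply Hwv0; auto. }
  assert (Hmsum : rsum n m = 1).
  { assert (H : is_series (fun k => rsum n (fun i => w k * v k i)) (rsum n m)).
    { apply (is_series_rsum n (fun i k => w k * v k i) m). auto. }
    apply (is_series_ext _ w) in H; [|intros; apply Hwv].
    rewrite <- (is_series_unique w _ H). apply is_series_unique; auto. }
  assert (Hmp : pconds n m) by (split; auto).
  assert (HGm : - M <= G (vec m n)).
  { pose proof (HB _ (probvec_vec n m Hmp)) as H. apply Rabs_le_between in H. lra. }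
  assert (HS1 : forall N, rsum N w <= 1) by (intros; apply partial_le; auto).
  assert (Hstep : forall N, rsum N (fun k => w k * G (vec (v k) n)) <= G (vec m n) + (1 - rsum N w) * M).
  { intros N. pose proof (rsum_nonneg N w (fun i _ => Hw i)) as HS0. specialize (HS1 N).
    destruct (Req_dec (rsum N w) 0) as [E0|E0].
    - assert (Hz : forall k, (k < N)%nat -> w k = 0) by (apply rsum_zero; auto).
      rewrite (rsum_ext N _ (fun _ => 0)) by (intros k Hk; rewrite Hz; auto; ring).
      rewrite rsum_const0, E0. lra.
    - assert (HSp : 0 < rsum N w) by lra.
      pose proof (Hfin N HSp) as HF.
      destruct (Req_dec (rsum N w) 1) as [E1|E1].
      + assert (Hd : forall i, (i < n)%nat -> m i - rsum N (fun k => w k * v k i) = 0).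
        { apply rsum_zero.
          - intros i Hi. specialize (Hmge N i Hi). lra.
          - rewrite rsum_minus, HPS, Hmsum, E1. ring. }
        replace (vec (fun i => rsum N (fun k => w k * v k i) / rsum N w) n) with (vec m n) in HF.
        * rewrite E1 in HF |- *. lra.
        * apply vec_ext. intros i Hi. specialize (Hd i Hi). rewrite E1. field_simplify. lra.
      + pose (S0 := rsum N w). fold S0 in HF, HSp, E1, HS1 |- *.
        assert (HSlt : S0 < 1) by (destruct (Rle_lt_or_eq_dec _ _ HS1); [auto| contradiction]).
        assert (HT : pconds n (fun i => (m i - rsum N (fun k => w k * v k i)) / (1 - S0))).
        { split.
          - intros i Hi. apply Rdiv_le_0_compat; [specialize (Hmge N i Hi); lra| lra].
          - unfold Rdiv. rewrite (rsum_ext n _ (fun i => / (1 - S0) * (m i - rsum N (fun k => w k * v k i)))) by (intros; ring).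
            rewrite rsum_scal, rsum_minus, HPS, Hmsum. fold S0. field. lra. }
        assert (Hc : S0 * G (vec (fun i => rsum N (fun k => w k * v k i) / rsum N w) n)
                     + (1 - S0) * G (vec (fun i => (m i - rsum N (fun k => w k * v k i)) / (1 - S0)) n)
                     <= G (vec m n)).
        { replace (vec m n) with (vec (fun i => S0 * (rsum N (fun k => w k * v k i) / rsum N w)
                     + (1 - S0) * ((m i - rsum N (fun k => w k * v k i)) / (1 - S0))) n).
          - apply conc_vec; [exact HG | apply Hmean; exact HSp | exact HT | lra].
          - apply vec_ext. intros i Hi. unfold S0. field. unfold S0 in *; split; lra. }
        pose proof (HB _ (probvec_vec _ _ HT)) as HBT. apply Rabs_le_between in HBT.
        assert ((1 - S0) * (- M) <= (1 - S0) * G (vec (fun i => (m i - rsum N (fun k => w k * v k i)) / (1 - S0)) n)).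
        { apply Rmult_le_compat_l; lra. }
        unfold S0 in *. lra. }
  assert (Hlim : Rbar_le (Series (fun k => w k * G (vec (v k) n))) (G (vec m n) + (1 - 1) * M)).
  { apply (is_lim_seq_le (sum_n (fun k => w k * G (vec (v k) n)))
             (fun N => G (vec m n) + (1 - sum_n w N) * M)).
    - intros N. rewrite !sum_n_rsum. apply Hstep.
    - apply Series_correct. exact Hex.
    - apply is_lim_seq_plus'; [apply is_lim_seq_const|].
      apply is_lim_seq_mult'; [|apply is_lim_seq_const].
      apply is_lim_seq_minus'; [apply is_lim_seq_const| exact Hws]. }
  simpl in Hlim. lra.
Qed.

Ltac req := match goal with |- ?a = ?b => change (@eq R a b) end; ring.

Lemma lim_le_bound (a : nat -> R) l B : is_series a l -> (forall N, rsum N a <= B) -> l <= B.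
Proof.
  intros Ha HB.
  assert (H : Rbar_le l B).
  { apply (is_lim_seq_le (sum_n a) (fun _ => B)); [|exact Ha|apply is_lim_seq_const].
    intros N. rewrite sum_n_rsum. apply HB. }
  exact H.
Qed.

Lemma tonelli (f : nat -> nat -> R) (g : nat -> R) (L : R) :
  (forall y z, 0 <= f y z) -> (forall y, is_series (f y) (g y)) -> is_series g L ->
  (forall z, is_series (fun y => f y z) (Series (fun y => f y z))) /\
  is_series (fun z => Series (fun y => f y z)) L.
Proof.
  intros Hf Hr Hg.
  assert (Hg0 : forall y, 0 <= g y) by (intros y; apply (series_nonneg (f y)); [intros; apply Hf| apply Hr]).
  assert (Hc : forall z, is_series (fun y => f y z) (Series (fun y => f y z))).
  { intros z. apply Series_correct. apply (ex_series_bound _ g).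
    - intros y. rewrite Rabs_right by (apply Rle_ge; auto). apply (term_le_series (f y)); auto.
    - exists L; auto. }
  split; [exact Hc|].
  set (h := fun z => Series (fun y => f y z)).
  assert (Hh0 : forall z, 0 <= h z) by (intros z; apply (series_nonneg (fun y => f y z)); [intros; apply Hf| apply Hc]).
  assert (Hpart : forall Z, rsum Z h <= L).
  { intros Z.
    assert (H : is_series (fun y => rsum Z (fun z => f y z)) (rsum Z h)).
    { apply (is_series_rsum Z (fun z y => f y z) h). intros; apply Hc. }
    apply (is_series_le _ _ _ _ H Hg). intros y. apply partial_le; auto. }
  assert (Hex : ex_series h) by (apply (nonneg_bounded_ex h L); auto).
  assert (HH := Series_correct _ Hex).
  assert (H1 : Series h <= L) by (apply (lim_le_bound h); auto).
  assert (H2 : L <= Series h).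
  { apply (lim_le_bound g); auto. intros Y.
    assert (H : is_series (fun z => rsum Y (fun y => f y z)) (rsum Y g)).
    { apply (is_series_rsum Y f g). intros; apply Hr. }
    apply (is_series_le _ _ _ _ H HH). intros z. apply partial_le; auto. }
  replace L with (Series h) by lra. exact HH.
Qed.

Lemma fubini (f u : nat -> nat -> R) (U : nat -> R) (LU M : R) :
  (forall y z, 0 <= u y z) -> (forall y z, Rabs (f y z) <= M * u y z) ->
  (forall y, is_series (u y) (U y)) -> is_series U LU ->
  exists L, is_series (fun z => Series (fun y => f y z)) L /\ is_series (fun y => Series (f y)) L.
Proof.
  intros Hu Hf HU HLU.
  set (K := Rabs M).
  assert (HK : 0 <= K) by apply Rabs_pos.
  assert (Hf' : forall y z, Rabs (f y z) <= K * u y z).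
  { intros y z. eapply Rle_trans; [apply Hf|]. apply Rmult_le_compat_r; [auto| apply RRle_abs]. }
  assert (Hr : forall y, is_series (f y) (Series (f y))).
  { intros y. apply Series_correct. apply (ex_series_bound _ (fun z => K * u y z)); auto.
    eexists. apply is_series_Rmult. apply HU. }
  assert (HrB : forall y, Rabs (Series (f y)) <= K * U y).
  { intros y. apply (series_abs_bound (f y) (fun z => K * u y z)); auto. apply is_series_Rmult; auto. }
  assert (Hexr : ex_series (fun y => Series (f y))).
  { apply (ex_series_bound _ (fun y => K * U y)); auto. eexists. apply is_series_Rmult; eauto. }
  set (g1 := fun y => Series (f y) + K * U y).
  assert (Hg1 : is_series g1 (Series g1)).
  { apply Series_correct. destruct Hexr as [lr Hlr]. exists (lr + K * LU).
    apply is_series_Rplus; auto. apply is_series_Rmult; auto. }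
  assert (T1 := tonelli (fun y z => f y z + K * u y z) g1 (Series g1)).
  destruct T1 as [C1 S1]; auto.
  { intros y z. specialize (Hf' y z). apply Rabs_le_between in Hf'. lra. }
  { intros y. apply is_series_Rplus; auto. apply is_series_Rmult; auto. }
  assert (T2 := tonelli (fun y z => K * u y z) (fun y => K * U y) (K * LU)).
  destruct T2 as [C2 S2]; auto.
  { intros y z. apply Rmult_le_pos; auto. }
  { intros y. apply is_series_Rmult; auto. }
  { apply is_series_Rmult; auto. }
  exists (Series g1 - K * LU). split.
  - apply (is_series_ext (fun z => Series (fun y => f y z + K * u y z) - Series (fun y => K * u y z))).
    + intros z. symmetry. apply is_series_unique.
      apply (is_series_ext (fun y => (f y z + K * u y z) - K * u y z)); [intros; req|].
      apply is_series_Rminus; auto.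
    + apply is_series_Rminus; auto.
  - apply (is_series_ext (fun y => g1 y - K * U y)); [intros; unfold g1; req|].
    apply is_series_Rminus; auto. apply is_series_Rmult; auto.
Qed.

Ltac rfield := match goal with |- ?a = ?b => change (@eq R a b) end; field.

Definition hterm (G : list R -> R) n (p : nat -> nat -> R) y :=
  if Rlt_dec 0 (marg_Y n p y) then marg_Y n p y * G (posterior n p y) else 0.

Lemma hterm_opp F n p : Series (hterm (fun l => - F l) n p) = - Series (hterm F n p).
Proof.
  rewrite <- Series_opp. apply Series_ext. intros y. unfold hterm.
  destruct (Rlt_dec 0 (marg_Y n p y)); ring.
Qed.

Lemma partA (G : list R -> R) M n p : F_concave G -> (forall l, probvec l -> Rabs (G l) <= M) ->
  joint_pmf n p -> Series (hterm G n p) <= G (marg_X n p).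
Proof.
  intros HG HB [Hp [Hex Hsum]].
  set (w := marg_Y n p).
  assert (Hw : forall y, 0 <= w y) by (intros; apply rsum_nonneg; auto).
  assert (Hws : is_series w 1).
  { rewrite <- Hsum. apply (is_series_rsum n p (fun x => Series (p x))).
    intros; apply Series_correct; auto. }
  assert (Hpz : forall x y, (x < n)%nat -> w y = 0 -> p x y = 0).
  { intros x y Hx E. apply (rsum_zero n (fun x => p x y)); auto. }
  assert (Hv : forall y, 0 < w y -> pconds n (fun x => p x y / w y)).
  { intros y Hy. split.
    - intros; apply Rdiv_le_0_compat; auto.
    - unfold Rdiv. rewrite (rsum_ext n _ (fun x => / w y * p x y)) by (intros; ring).
      rewrite rsum_scal. change (rsum n (fun x => p x y)) with (w y). field. lra. }
  assert (Hm : forall x, (x < n)%nat ->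
     is_series (fun y => w y * (fun y x => p x y / w y) y x) (Series (p x))).
  { intros x Hx. apply (is_series_ext (p x)).
    - intros y. simpl. destruct (Hw y) as [Hy|Hy].
      + field. lra.
      + rewrite <- Hy, Hpz; auto. ring.
    - apply Series_correct; auto. }
  destruct (jensen G M n w (fun y x => p x y / w y) (fun x => Series (p x)) HG HB Hw Hws Hv Hm)
    as [_ HJ].
  unfold marg_X. change (map (fun x => Series (p x)) (seq 0 n)) with (vec (fun x => Series (p x)) n).
  eapply Rle_trans; [|exact HJ]. right. apply Series_ext. intros y. unfold hterm.
  fold w. destruct (Rlt_dec 0 (w y)).
  - reflexivity.
  - assert (w y = 0) by (destruct (Hw y); [contradiction|auto]). rewrite H. ring.
Qed.

Lemma partB (G : list R -> R) M n p : F_concave G -> (forall l, probvec l -> Rabs (G l) <= M) ->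
  joint3_pmf n p -> cond_indep_Z_X_given_Y n p ->
  Series (hterm G n (marg_XY p)) <= Series (hterm G n (marg_XZ p)).
Proof.
  intros HG HB [Hp [Hex1 [Hex2 Hsum]]] HCI.
  set (a := marg_XY p). set (b := marg_XZ p).
  set (py := marg_Y n a). set (pz := marg_Y n b).
  set (pyz := fun y z => rsum n (fun x => p x y z)).
  assert (HM : 0 <= M).
  { assert (probvec (1 :: nil)) by (split; [constructor; [lra|constructor] | simpl; ring]).
    specialize (HB _ H). pose proof (Rabs_pos (G (1 :: nil))). lra. }
  assert (Ha : forall x y, is_series (p x y) (a x y)).
  { intros. apply Series_correct; auto. }
  assert (Ha0 : forall x y, 0 <= a x y).
  { intros. apply (series_nonneg (p x y)); auto. }
  assert (HA : forall x, is_series (fun y => a x y) (Series (fun y => a x y))).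
  { intros x. apply Series_correct. exact (Hex2 x). }
  assert (HT : forall x, (forall z, is_series (fun y => p x y z) (b x z)) /\
                        is_series (fun z => b x z) (Series (fun y => a x y))).
  { intros x. destruct (tonelli (p x) (fun y => a x y) (Series (fun y => a x y)) (Hp x) (Ha x) (HA x)) as [H1 H2].
    split; [exact H1 | exact H2]. }
  assert (Hb : forall x z, is_series (fun y => p x y z) (b x z)) by (intros x z; exact (proj1 (HT x) z)).
  assert (Hpy : is_series py 1).
  { rewrite <- Hsum. apply (is_series_rsum n a (fun x => Series (fun y => a x y))). auto. }
  assert (Hpz : is_series pz 1).
  { rewrite <- Hsum. apply (is_series_rsum n b (fun x => Series (fun y => a x y))). intros x _; exact (proj2 (HT x)). }
  assert (Hpyz_z : forall y, is_series (fun z => pyz y z) (py y)).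
  { intros y. apply (is_series_rsum n (fun x z => p x y z) (fun x => a x y)). auto. }
  assert (Hpyz_y : forall z, is_series (fun y => pyz y z) (pz z)).
  { intros z. apply (is_series_rsum n (fun x y => p x y z) (fun x => b x z)). auto. }
  assert (Hpyz0 : forall y z, 0 <= pyz y z) by (intros; apply rsum_nonneg; auto).
  assert (Hpy0 : forall y, 0 <= py y) by (intros; apply rsum_nonneg; auto).
  assert (Hpz0 : forall z, 0 <= pz z) by (intros; apply rsum_nonneg; intros; apply (series_nonneg (fun y => p i y z)); auto).
  assert (Hpy_p : forall y, py y = 0 -> forall x z, (x < n)%nat -> p x y z = 0).
  { intros y E x z Hx. assert (a x y = 0) by (apply (rsum_zero n (fun x => a x y)); auto).
    pose proof (term_le_series (p x y) (a x y) z (Hp x y) (Ha x y)). pose proof (Hp x y z). lra. }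
  assert (Hpy_pyz : forall y z, py y = 0 -> pyz y z = 0).
  { intros y z E. unfold pyz. rewrite <- (rsum_const0 n). apply rsum_ext. intros; apply Hpy_p; auto. }
  assert (Hpyz_py : forall y z, 0 < pyz y z -> 0 < py y).
  { intros y z H. destruct (Hpy0 y) as [|E]; auto. rewrite Hpy_pyz in H; [lra|auto]. }
  assert (Hpz_pyz : forall y z, pz z = 0 -> pyz y z = 0).
  { intros y z E. pose proof (Hpyz_y z) as H. rewrite E in H.
    apply (series_zero (fun y => pyz y z)); [intros; apply Hpyz0 | exact H]. }
  assert (CI : forall x y z, p x y z * py y = a x y * pyz y z) by (intros; apply HCI).
  set (c := fun y => G (vec (fun x => a x y / py y) n)).
  assert (Hpc : forall y, 0 < py y -> pconds n (fun x => a x y / py y)).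
  { intros y Hy. split.
    - intros; apply Rdiv_le_0_compat; auto.
    - unfold Rdiv. rewrite (rsum_ext n _ (fun x => / py y * a x y)) by (intros; ring).
      rewrite rsum_scal. change (rsum n (fun x => a x y)) with (py y). field. lra. }
  assert (Hz : forall z, Series (fun y => pyz y z * c y) <= hterm G n b z).
  { intros z. unfold hterm. fold pz. destruct (Rlt_dec 0 (pz z)) as [Hz|Hz].
    - set (w := fun y => pyz y z / pz z).
      assert (Hw : forall y, 0 <= w y) by (intros; apply Rdiv_le_0_compat; auto).
      assert (Hws : is_series w 1).
      { apply (is_series_ext (fun y => / pz z * pyz y z)); [intros; unfold w; rfield; lra|].
        replace 1 with (/ pz z * pz z) by (field; lra). apply is_series_Rmult; auto. }
      assert (Hv : forall y, 0 < w y -> pconds n (fun x => a x y / py y)).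
      { intros y Hy. apply Hpc. apply (Hpyz_py y z). unfold w in Hy.
        destruct (Hpyz0 y z) as [|E]; auto. rewrite <- E in Hy. unfold Rdiv in Hy. lra. }
      assert (Hm : forall x, (x < n)%nat ->
         is_series (fun y => w y * (fun y x => a x y / py y) y x) (b x z / pz z)).
      { intros x Hx. apply (is_series_ext (fun y => / pz z * p x y z)).
        - intros y. simpl. unfold w. destruct (Hpy0 y) as [Hy|Hy].
          + assert (E : p x y z = a x y * pyz y z / py y) by (rewrite <- CI; field; lra).
            rewrite E. rfield. split; lra.
          + rewrite Hpy_p, Hpy_pyz; auto. unfold Rdiv; req.
        - unfold Rdiv. rewrite Rmult_comm. apply is_series_Rmult; auto. }
      destruct (jensen G M n w (fun y x => a x y / py y) (fun x => b x z / pz z) HG HB Hw Hws Hv Hm)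
        as [HJs HJ].
      assert (E : Series (fun y => pyz y z * c y) = pz z * Series (fun k => w k * G (vec (fun x => a x k / py k) n))).
      { apply is_series_unique. apply (is_series_ext (fun y => pz z * (w y * G (vec (fun x => a x y / py y) n)))).
        - intros y. unfold w, c. rfield. lra.
        - apply is_series_Rmult; auto. }
      rewrite E. apply Rmult_le_compat_l; [lra|]. exact HJ.
    - assert (E : pz z = 0) by (destruct (Hpz0 z); [contradiction|auto]).
      right. apply is_series_unique. apply (is_series_ext (fun _ => 0)); [|apply is_series_0].
      intros y. rewrite Hpz_pyz; auto. req. }
  assert (Hf : forall y z, Rabs (pyz y z * c y) <= M * pyz y z).
  { intros y z. rewrite Rabs_mult, Rabs_right by (apply Rle_ge; auto).
    destruct (Hpyz0 y z) as [H|H].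
    - rewrite Rmult_comm. apply Rmult_le_compat_r; [lra|].
      apply HB, probvec_vec, Hpc. apply (Hpyz_py y z H).
    - rewrite <- H. lra. }
  destruct (fubini (fun y z => pyz y z * c y) pyz py 1 M Hpyz0 Hf Hpyz_z Hpy) as [L [HL1 HL2]].
  assert (EY : Series (hterm G n a) = L).
  { apply is_series_unique. apply (is_series_ext (fun y => Series (fun z => pyz y z * c y))); [|exact HL2].
    intros y. unfold hterm. fold py.
    rewrite (is_series_unique _ (py y * c y)) by (apply (is_series_scal_r (c y) (fun z => pyz y z)); auto).
    destruct (Rlt_dec 0 (py y)) as [Hy|Hy].
    - reflexivity.
    - assert (E : py y = 0) by (destruct (Hpy0 y); [contradiction|auto]). rewrite E. req. }
  assert (HZex : ex_series (hterm G n b)).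
  { apply (ex_series_bound _ (fun z => M * pz z)).
    - intros z. unfold hterm. fold pz. destruct (Rlt_dec 0 (pz z)) as [Hz'|Hz'].
      + rewrite Rabs_mult, Rabs_right by lra. rewrite Rmult_comm. apply Rmult_le_compat_r; [lra|].
        apply HB. unfold posterior. apply probvec_vec. split.
        * intros x Hx. apply Rdiv_le_0_compat; auto. apply (series_nonneg (fun y => p x y z)); auto.
        * unfold Rdiv. rewrite (rsum_ext n _ (fun x => / pz z * b x z)) by (intros; unfold pz, b; ring).
          rewrite rsum_scal. change (rsum n (fun x => b x z)) with (pz z). field. lra.
      + rewrite Rabs_R0. apply Rmult_le_pos; auto.
    - eexists. apply is_series_Rmult. exact Hpz. }
  rewrite EY. apply (is_series_le _ _ _ _ HL1 (Series_correct _ HZex)). exact Hz.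
Qed.


Theorem proposition2 (eta : R -> R) (F : list R -> R) :
  gen_entropy eta F ->
  (forall (n : nat) (p : nat -> nat -> R),
      joint_pmf n p -> H_X eta F n p - H_cond eta F n p >= 0) /\
  (forall (n : nat) (p : nat -> nat -> nat -> R),
      joint3_pmf n p -> cond_indep_Z_X_given_Y n p ->
      H_cond eta F n (marg_XZ p) >= H_cond eta F n (marg_XY p)).
Proof.
  intros [[M HM] [_ [_ [[Heta HF] | [Heta HF]]]]].
  - split.
    + intros n p Hp. unfold H_X, H_cond.
      pose proof (partA F M n p HF HM Hp) as H. unfold hterm in H.
      apply Heta in H. lra.
    + intros n p Hp HCI. unfold H_cond.
      pose proof (partB F M n p HF HM Hp HCI) as H. unfold hterm in H.
      apply Heta in H. lra.
  - assert (HG : F_concave (fun l => - F l)).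
    { intros l1 l2 t H1 H2 Hl Ht. pose proof (HF l1 l2 t H1 H2 Hl Ht). lra. }
    assert (HB : forall l, probvec l -> Rabs (- F l) <= M).
    { intros l Hl. rewrite Rabs_Ropp. auto. }
    split.
    + intros n p Hp. unfold H_X, H_cond.
      pose proof (partA _ M n p HG HB Hp) as H. rewrite hterm_opp in H. unfold hterm in H.
      assert (H' : F (marg_X n p) <= Series (fun y => if Rlt_dec 0 (marg_Y n p y) then marg_Y n p y * F (posterior n p y) else 0)) by lra.
      apply Heta in H'. lra.
    + intros n p Hp HCI. unfold H_cond.
      pose proof (partB _ M n p HG HB Hp HCI) as H. rewrite !hterm_opp in H. unfold hterm in H.
      apply Ropp_le_cancel in H.
      apply Heta in H. lra.
Qed.
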